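(* Let $\mathcal H$ be a real Hilbert space, $T:\mathcal H\rightrightarrows\mathcal H$ maximal monotone, $a,b\ge0$, $\psi(\rho,z):=a\rho^2+b\rho+\big(\rho\|J_{\rho T}(z)-z\|\big)^2$, $z\in\mathcal H$ with $0\notin T(z)$, $0<\theta_-<\theta_+<\infty$, and let $\rho_-,\rho_+>0$ be such that $\psi(\rho_-,z)=\theta_-$ and $\psi(\rho_+,z)=\theta_+$. Let $\rho>0$. (a) If $\psi(\rho,z)<\theta_-$, then $\rho<\rho_-$ and $\rho_+\le\rho\theta_+/\psi(\rho,z)$. (b) If $\psi(\rho,z)>\theta_+$, then $\rho\theta_-/\psi(\rho,z)\le\rho_-$ and $\rho_+<\rho$.
   Context: $J_{\rho T}:=(\rho T+I)^{-1}$ denotes the resolvent of $\rho T$. *)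

(* Defs.v *)
From HB Require Import structures.
From mathcomp Require Import all_boot all_order all_algebra.
From mathcomp Require Import all_classical all_reals all_analysis.
Set Implicit Arguments. Unset Strict Implicit. Unset Printing Implicit Defensive.
Import Order.TTheory GRing.Theory Num.Theory.
Import numFieldNormedType.Exports.
Local Open Scope classical_set_scope.
Local Open Scope ring_scope.

(* A real Hilbert space is a complete normed space V over R whose norm is
   induced by an inner product [inner]. *)
Definition is_inner_product {R : realType} {V : normedModType R}
  (inner : V -> V -> R) : Prop :=
  [/\ (forall x y, inner x y = inner y x),
      (forall x y z, inner (x + y) z = inner x z + inner y z),
      (forall (c : R) x y, inner (c *: x) y = c * inner x y)
    & (forall x, inner x x = `|x| ^+ 2)].

(* set-valued operators T : V ⇉ V, represented as V -> set V *)
Definition monotone_op {R : realType} {V : normedModType R}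
  (inner : V -> V -> R) (T : V -> set V) : Prop :=
  forall x y u v, T x u -> T y v -> 0 <= inner (x - y) (u - v).

Definition maximal_monotone {R : realType} {V : normedModType R}
  (inner : V -> V -> R) (T : V -> set V) : Prop :=
  monotone_op inner T /\
  forall S : V -> set V, monotone_op inner S ->
    (forall x, T x `<=` S x) -> forall x, S x = T x.

(* J_{rho T}(z) = (rho T + I)^{-1}(z): the (unique, for maximal monotone T
   and rho > 0) x with z \in x + rho T(x). *)
Definition resolvent {R : realType} {V : normedModType R}
  (T : V -> set V) (rho : R) (z : V) : V :=
  xget z [set x | exists2 u, T x u & z = x + rho *: u].

Definition psi {R : realType} {V : normedModType R}
  (T : V -> set V) (a b : R) (rho : R) (z : V) : R :=
  a * rho ^+ 2 + b * rho + (rho * `|resolvent T rho z - z|) ^+ 2.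

(* Main.v *)
Require Import Defs.
From HB Require Import structures.
From mathcomp Require Import all_boot all_order all_algebra.
From mathcomp Require Import all_classical all_reals all_analysis.
From mathcomp Require Import ring lra.
Import Order.TTheory GRing.Theory Num.Theory.
Import numFieldNormedType.Exports.
Local Open Scope classical_set_scope.
Local Open Scope ring_scope.

Lemma final_real (R : realType) (K r2 : R) : 0 <= K -> 0 <= r2 ->
  (forall t, 0 < t < 1 -> forall e, 0 < e -> exists B, [/\ 0 <= B, K <= B + e &
      (1 - t) ^+ 2 * B ^+ 2 <= r2 + e]) ->
  K ^+ 2 <= r2.
Proof.
move=> K0 r20 H.
suff Hs : forall e, 0 < e <= 1 -> K ^+ 2 <= r2 + e.
  apply/ler_addgt0Pr => e e0.
  case: (lerP e 1) => he; first by apply: Hs; lra.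
  have := Hs 1 ltac:(lra); lra.
move=> e /andP[e0 e1].
have K20 : 0 <= K ^+ 2 by rewrite sqr_ge0.
set t := e / (4 * (K ^+ 2 + 1)).
have ht0 : 0 < t by rewrite /t divr_gt0 //; lra.
have htK : t * (4 * (K ^+ 2 + 1)) = e by rewrite /t mulfVK //; lra.
have ht1 : t <= 4^-1.
  have : t * 4 <= t * (4 * (K ^+ 2 + 1)) by rewrite ler_wpM2l //; nra.
  lra.
set ep := e / (8 * (K + 1)).
have hep0 : 0 < ep by rewrite /ep divr_gt0 //; lra.
have hepK : ep * (8 * (K + 1)) = e by rewrite /ep mulfVK //; lra.
have [|B [B0 KB HB]] := H t _ ep hep0; first by lra.
have hep1 : ep <= e / 8.
  have : ep * 8 <= ep * (8 * (K + 1)) by rewrite ler_wpM2l //; nra.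
  lra.
have hB2 : K ^+ 2 - e / 4 <= B ^+ 2.
  have h2 : 2 * ep * K <= e / 4.
    have : 2 * ep * K <= 2 * ep * (K + 1) by nra.
    lra.
  case: (lerP ep K) => hk.
    have hm : 0 <= (B - (K - ep)) * (B + (K - ep)) by apply: mulr_ge0; lra.
    nra.
  nra.
have h1t : 1 - 2 * t <= (1 - t) ^+ 2 by nra.
case: (lerP (K ^+ 2) (e / 4)) => hk; first by lra.
have : (1 - 2 * t) * (K ^+ 2 - e / 4) <= r2 + ep.
  apply: le_trans HB.
  apply: le_trans (_ : (1 - t) ^+ 2 * (K ^+ 2 - e / 4) <= _).
    by rewrite ler_wpM2r //; lra.
  by rewrite ler_wpM2l // sqr_ge0.
have : 2 * t * K ^+ 2 <= e / 2.
  have : 2 * t * K ^+ 2 <= 2 * t * (K ^+ 2 + 1) by nra.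
  lra.
nra.
Qed.

Lemma inv_mono (R : realType) (N n : nat) : (N <= n)%N -> n.+1%:R^-1 <= N.+1%:R^-1 :> R.
Proof. by move=> h; rewrite lef_pV2 ?posrE ?ltr0n // ler_nat ltnS. Qed.

Section Hil.
Variables (R : realType) (V : completeNormedModType R) (inner : V -> V -> R).
Hypothesis Hip : is_inner_product inner.

Lemma innerC x y : inner x y = inner y x. Proof. by case: Hip. Qed.
Lemma innerDl x y u : inner (x + y) u = inner x u + inner y u. Proof. by case: Hip. Qed.
Lemma innerZl (c : R) x u : inner (c *: x) u = c * inner x u. Proof. by case: Hip. Qed.
Lemma innerxx x : inner x x = `|x| ^+ 2. Proof. by case: Hip. Qed.
Lemma innerDr x y u : inner u (x + y) = inner u x + inner u y.
Proof. by rewrite innerC innerDl !(innerC u). Qed.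
Lemma innerZr (c : R) x u : inner u (c *: x) = c * inner u x.
Proof. by rewrite innerC innerZl (innerC u). Qed.
Lemma inner0l u : inner 0 u = 0.
Proof. by rewrite -(scale0r (0:V)) innerZl mul0r. Qed.
Lemma inner0r u : inner u 0 = 0.
Proof. by rewrite innerC inner0l. Qed.
Lemma innerNl x u : inner (- x) u = - inner x u.
Proof. by rewrite -scaleN1r innerZl mulN1r. Qed.
Lemma innerNr x u : inner u (- x) = - inner u x.
Proof. by rewrite -scaleN1r innerZr mulN1r. Qed.
Lemma innerBl x y u : inner (x - y) u = inner x u - inner y u.
Proof. by rewrite innerDl innerNl. Qed.
Lemma innerBr x y u : inner u (x - y) = inner u x - inner u y.
Proof. by rewrite innerDr innerNr. Qed.
Lemma innerxx_ge0 x : 0 <= inner x x.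
Proof. by rewrite innerxx sqr_ge0. Qed.

Definition SV (f : V -> V -> V) (l : seq (R * V * V)) : V :=
  \sum_(p <- l) p.1.1 *: f p.1.2 p.2.
Definition SR (f : V -> V -> R) (l : seq (R * V * V)) : R :=
  \sum_(p <- l) p.1.1 * f p.1.2 p.2.

Lemma SV_nil f : SV f [::] = 0. Proof. by rewrite /SV big_nil. Qed.
Lemma SR_nil f : SR f [::] = 0. Proof. by rewrite /SR big_nil. Qed.
Lemma SV_cons f p l : SV f (p :: l) = p.1.1 *: f p.1.2 p.2 + SV f l.
Proof. by rewrite /SV big_cons. Qed.
Lemma SR_cons f p l : SR f (p :: l) = p.1.1 * f p.1.2 p.2 + SR f l.
Proof. by rewrite /SR big_cons. Qed.
Lemma SV_cat f l1 l2 : SV f (l1 ++ l2) = SV f l1 + SV f l2.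
Proof. by rewrite /SV big_cat. Qed.
Lemma SR_cat f l1 l2 : SR f (l1 ++ l2) = SR f l1 + SR f l2.
Proof. by rewrite /SR big_cat. Qed.

Definition scl (c : R) (p : R * V * V) := (c * p.1.1, p.1.2, p.2).

Lemma SV_scl f c l : SV f (map (scl c) l) = c *: SV f l.
Proof.
elim: l => [|p l IH]; first by rewrite /= !SV_nil scaler0.
by rewrite /= !SV_cons IH scalerDr scalerA.
Qed.
Lemma SR_scl f c l : SR f (map (scl c) l) = c * SR f l.
Proof.
elim: l => [|p l IH]; first by rewrite /= !SR_nil mulr0.
by rewrite /= !SR_cons IH mulrDr mulrA.
Qed.

Lemma inner_SVr f x l : inner x (SV f l) = SR (fun y v => inner x (f y v)) l.
Proof.
elim: l => [|p l IH]; first by rewrite SV_nil SR_nil inner0r.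
by rewrite SV_cons SR_cons innerDr innerZr IH.
Qed.
Lemma inner_SVl f x l : inner (SV f l) x = SR (fun y v => inner (f y v) x) l.
Proof.
rewrite innerC inner_SVr /SR; apply: eq_bigr => p _; by rewrite innerC.
Qed.


Lemma cs x y : inner x y <= `|x| * `|y|.
Proof.
have [hx|hx] := eqVneq `|x| 0.
  by rewrite (normr0_eq0 hx) inner0l normr0 mul0r.
have [hy|hy] := eqVneq `|y| 0.
  by rewrite (normr0_eq0 hy) inner0r normr0 mulr0.
have a0 : 0 < `|x| by rewrite lt_def hx normr_ge0.
have b0 : 0 < `|y| by rewrite lt_def hy normr_ge0.
set s := `|y| / `|x|.
have hs : s * `|x| = `|y| by rewrite /s mulfVK // gt_eqF.
have h := innerxx_ge0 (s *: x - y).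
rewrite !(innerBl, innerBr, innerZl, innerZr) (innerC y x) in h.
rewrite !innerxx in h.
set a := `|x| in hs a0 h *; set b := `|y| in hs b0 h *.
set q := inner x y in h *.
have h2 : s * q <= b ^+ 2.
  have : s * (s * a ^+ 2) = b ^+ 2 by rewrite mulrA -(expr2 s) -exprMn hs.
  lra.
have h3 : b * q <= a * b ^+ 2.
  have : a * (s * q) <= a * b ^+ 2 by rewrite ler_wpM2l // ltW.
  by rewrite mulrA (mulrC a) hs.
rewrite expr2 mulrA in h3.
have : b * q <= b * (a * b) by rewrite mulrA (mulrC b a).
by rewrite ler_pM2l.
Qed.

Variables (T : V -> set V) (rho : R) (z : V).
Hypothesis Hmono : monotone_op inner T.
Hypothesis Hrho : 0 < rho.

Definition w (v : V) := z - rho *: v.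
Definition valid (l : seq (R * V * V)) :=
  forall p, p \in l -> 0 <= p.1.1 /\ T p.1.2 p.2.
Definition M l := SR (fun _ _ => 1) l.
Definition Y l := SV (fun y _ => y) l.
Definition W l := SV (fun _ v => w v) l.
Definition S l := SR (fun y v => inner y (w v)) l.
Definition X l := 2^-1 *: (Y l + W l).
Definition g l := S l - inner (X l) (X l).
Definition Lf x l := SR (fun y v => inner (x - y) (x - w v)) l.

Lemma Lf_expand x l :
  Lf x l = M l * inner x x - inner x (Y l) - inner x (W l) + S l.
Proof.
rewrite /Lf /M /S inner_SVr inner_SVr.
elim: l => [|p l IH]; first by rewrite !SR_nil; ring.
rewrite !SR_cons IH !innerBl !innerBr (innerC p.1.2 x); ring.
Qed.

Lemma innerX x l : inner x (X l) = 2^-1 * (inner x (Y l) + inner x (W l)).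
Proof. by rewrite /X innerZr innerDr. Qed.

Lemma Lf_g x l : M l = 1 -> Lf x l = g l + inner (x - X l) (x - X l).
Proof.
move=> HM; rewrite Lf_expand HM /g !innerBl !innerBr (innerC (X l) x) !(innerX x).
by field.
Qed.

Definition D y v l := SR (fun y' v' => inner (y' - y) (w v' - w v)) l.

Lemma D_expand y v l :
  D y v l = S l + M l * inner y (w v) - inner y (W l) - inner (Y l) (w v).
Proof.
rewrite /D /M /S /W /Y inner_SVr inner_SVl.
elim: l => [|p l IH]; first by rewrite !SR_nil; ring.
rewrite !SR_cons IH !innerBl !innerBr; ring.
Qed.

Lemma wB v v' : w v' - w v = - (rho *: (v' - v)).
Proof.
by rewrite /w opprB addrA addrC addrA addKr scalerBr opprB addrC.
Qed.

Lemma D_le0 y v l : valid l -> T y v -> D y v l <= 0.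
Proof.
move=> Hl Hyv; elim: l Hl => [|p l IH] Hl; first by rewrite /D SR_nil.
rewrite /D SR_cons -/(D y v l).
have [Hp HT] := Hl p (mem_head _ _).
have -> : inner (p.1.2 - y) (w p.2 - w v) = - (rho * inner (p.1.2 - y) (p.2 - v)).
  by rewrite wB innerNr innerZr.
have h1 := Hmono _ _ _ _ HT Hyv.
have h2 : D y v l <= 0 by apply: IH => q Hq; apply: Hl; rewrite in_cons Hq orbT.
have h3 : 0 <= p.1.1 * (rho * inner (p.1.2 - y) (p.2 - v)).
  by apply: mulr_ge0 => //; apply: mulr_ge0 => //; apply: ltW.
lra.
Qed.

Lemma P_le0 l : valid l -> M l * S l - inner (Y l) (W l) <= 0.
Proof.
elim: l => [|p l IH] Hl.
  by rewrite /M /S /Y /W !SR_nil !SV_nil inner0l; lra.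
have [Hp HT] := Hl p (mem_head _ _).
have Hl' : valid l by move=> q Hq; apply: Hl; rewrite in_cons Hq orbT.
have h1 := IH Hl'.
have h2 := D_le0 _ _ _ Hl' HT.
rewrite D_expand in h2.
have h3 : p.1.1 * (S l + M l * inner p.1.2 (w p.2) - inner p.1.2 (W l) - inner (Y l) (w p.2)) <= 0.
  by rewrite mulr_ge0_le0.
have HS : S (p :: l) = p.1.1 * inner p.1.2 (w p.2) + S l by rewrite /S SR_cons.
have HM : M (p :: l) = p.1.1 + M l by rewrite /M SR_cons mulr1.
have HI : inner (Y (p :: l)) (W (p :: l)) = p.1.1 * (p.1.1 * inner p.1.2 (w p.2))
   + p.1.1 * inner p.1.2 (W l) + p.1.1 * inner (Y l) (w p.2) + inner (Y l) (W l).
  rewrite /Y /W !SV_cons -/(Y l) -/(W l) innerDl (innerDr (p.1.1 *: w p.2)).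
  rewrite (innerDr (p.1.1 *: w p.2)) !innerZl !innerZr; ring.
rewrite HS HM HI.
have E : (p.1.1 + M l) * (p.1.1 * inner p.1.2 (w p.2) + S l) -
  (p.1.1 * (p.1.1 * inner p.1.2 (w p.2)) + p.1.1 * inner p.1.2 (W l) +
   p.1.1 * inner (Y l) (w p.2) + inner (Y l) (W l)) =
  (M l * S l - inner (Y l) (W l)) +
  p.1.1 * (S l + M l * inner p.1.2 (w p.2) - inner p.1.2 (W l) - inner (Y l) (w p.2)).
  ring.
rewrite E; lra.
Qed.

Lemma g_le0 l : valid l -> M l = 1 -> g l <= 0.
Proof.
move=> Hl HM; have hP := P_le0 _ Hl; rewrite HM mul1r in hP.
have h := innerxx_ge0 (Y l - W l).
rewrite !innerBl !innerBr (innerC (W l) (Y l)) in h.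
rewrite /g /X !innerZl !innerZr !innerDl !innerDr (innerC (W l) (Y l)).
lra.
Qed.

Definition mix t l1 l2 := map (scl (1 - t)) l1 ++ map (scl t) l2.

Lemma valid_mix t l1 l2 : 0 <= t <= 1 -> valid l1 -> valid l2 -> valid (mix t l1 l2).
Proof.
move=> /andP[t0 t1] H1 H2 p; rewrite mem_cat => /orP[] /mapP[q Hq ->] /=.
  have [h1 h2] := H1 q Hq; split => //; apply: mulr_ge0 => //; lra.
have [h1 h2] := H2 q Hq; split => //; apply: mulr_ge0 => //.
Qed.

Lemma SV_mix f t l1 l2 : SV f (mix t l1 l2) = (1 - t) *: SV f l1 + t *: SV f l2.
Proof. by rewrite /mix SV_cat !SV_scl. Qed.
Lemma SR_mix f t l1 l2 : SR f (mix t l1 l2) = (1 - t) * SR f l1 + t * SR f l2.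
Proof. by rewrite /mix SR_cat !SR_scl. Qed.

Lemma M_mix t l1 l2 : M l1 = 1 -> M l2 = 1 -> M (mix t l1 l2) = 1.
Proof. by rewrite /M SR_mix => -> ->; ring. Qed.

Lemma X_mix t l1 l2 : X (mix t l1 l2) = (1 - t) *: X l1 + t *: X l2.
Proof.
rewrite /X /Y /W !SV_mix !scalerDr !scalerA !(mulrC 2^-1) -!scalerA.
by rewrite addrACA.
Qed.

Lemma g_mix t l1 l2 : M l1 = 1 -> M l2 = 1 ->
  g (mix t l1 l2) =
    (1 - t) * (g l1 + inner (X (mix t l1 l2) - X l1) (X (mix t l1 l2) - X l1))
  + t * (g l2 + inner (X (mix t l1 l2) - X l2) (X (mix t l1 l2) - X l2)).
Proof.
move=> H1 H2.
have := Lf_g (X (mix t l1 l2)) _ (M_mix t _ _ H1 H2).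
rewrite subrr inner0l addr0 => <-.
by rewrite /Lf SR_mix -/(Lf _ l1) -/(Lf _ l2) (Lf_g _ _ H1) (Lf_g _ _ H2).
Qed.

Definition sing y v : seq (R * V * V) := [:: (1, y, v)].

Lemma valid_sing y v : T y v -> valid (sing y v).
Proof. by move=> H p; rewrite inE => /eqP -> /=; split. Qed.
Lemma M_sing y v : M (sing y v) = 1.
Proof. by rewrite /M SR_cons SR_nil /=; ring. Qed.
Lemma X_sing y v : X (sing y v) = 2^-1 *: (y + w v).
Proof. by rewrite /X /Y /W !SV_cons !SV_nil /= !scale1r !addr0. Qed.
Lemma Lf_sing x y v : Lf x (sing y v) = inner (x - y) (x - w v).
Proof. by rewrite /Lf SR_cons SR_nil /=; ring. Qed.

Lemma ball_id x y u : inner (x - y) (x - u) =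
  inner (x - 2^-1 *: (y + u)) (x - 2^-1 *: (y + u)) -
  inner (2^-1 *: (y - u)) (2^-1 *: (y - u)).
Proof.
rewrite !(innerBl, innerBr, innerZl, innerZr, innerDl, innerDr).
rewrite (innerC y x) (innerC u x) (innerC u y).
by field.
Qed.

Hypothesis Hmax : maximal_monotone inner T.

Lemma graph_ne : exists y v, T y v.
Proof.
case: (pselect (exists y v, T y v)) => // Hn.
pose S0 := fun a => T a `|` [set b | a = 0 /\ b = 0].
have HS0 : monotone_op inner S0.
  move=> x y u v [Hx|[-> ->]]; first by exfalso; apply: Hn; exists x, u.
  move=> [Hy|[-> ->]]; first by exfalso; apply: Hn; exists y, v.
  by rewrite subrr inner0l.
have := Hmax.2 S0 HS0 (fun a b Hb => or_introl Hb) 0.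
move=> E0; have : S0 0 0 by right.
by rewrite E0 => H; exists 0, 0.
Qed.

Definition Es := [set r : R | exists l, [/\ valid l, M l = 1 & r = g l]].

Lemma Es_sup : has_sup Es.
Proof.
have [y0 [v0 H0]] := graph_ne.
split.
  exists (g (sing y0 v0)), (sing y0 v0); split => //.
    exact: valid_sing.
  exact: M_sing.
exists 0 => r [l [Hl HM ->]]; exact: g_le0.
Qed.

Lemma G_le0 : sup Es <= 0.
Proof.
apply: ge_sup; first exact: Es_sup.1.
move=> r [l [Hl HM ->]]; exact: g_le0.
Qed.

Lemma key_ineq y v l (t : R) (n : nat) : T y v -> valid l -> M l = 1 ->
  sup Es - n.+1%:R^-1 < g l -> 0 < t < 1 ->
  t * ((1 - t) ^+ 2 * inner (X l - 2^-1 *: (y + w v)) (X l - 2^-1 *: (y + w v)))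
  <= t * inner (2^-1 *: (y - w v)) (2^-1 *: (y - w v)) + n.+1%:R^-1.
Proof.
move=> Hyv Hl HM Hg /andP[t0 t1].
set l' := mix t l (sing y v).
have Hl' : valid l' by apply: valid_mix => //; [lra | exact: valid_sing].
have HM' : M l' = 1 by apply: M_mix => //; exact: M_sing.
have Hsup : g l' <= sup Es by apply: sup_upper_bound; [exact: Es_sup | exists l'].
have Eg : g l' = Lf (X l') l'.
  by rewrite (Lf_g _ _ HM') subrr inner0l addr0.
rewrite Eg /Lf SR_mix -/(Lf _ l) -/(Lf _ (sing y v)) Lf_sing ball_id in Hsup.
rewrite (Lf_g _ _ HM) in Hsup.
set c := 2^-1 *: (y + w v) in Hsup *.
have Hx : X l' - c = (1 - t) *: (X l - c).
  rewrite /l' X_mix X_sing -/c scalerBr scalerBl scale1r.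
  by rewrite scalerBl scale1r opprB addrA.
rewrite Hx innerZl innerZr in Hsup.
have h1 := innerxx_ge0 (X l' - X l).
have G0 := G_le0.
set Q := inner (X l - c) (X l - c) in Hsup *.
set Lq := inner (X l' - X l) (X l' - X l) in Hsup h1.
set Dd := inner (2^-1 *: (y - w v)) _ in Hsup *.
set G := sup Es in Hg Hsup G0.
have d0 : 0 < n.+1%:R^-1 :> R by rewrite invr_gt0 ltr0n.
set dl := n.+1%:R^-1 in Hg d0 *.
have h2 : (1 - t) * (G - dl) <= (1 - t) * (g l + Lq).
  apply: ler_wpM2l; lra.
have h3 : t * G <= 0 by rewrite mulr_ge0_le0 //; lra.
have h4 : 0 <= t * dl by rewrite mulr_ge0 //; lra.
rewrite expr2.
nra.
Qed.

Lemma cauchy_bound l1 l2 (n m : nat) : valid l1 -> M l1 = 1 -> valid l2 -> M l2 = 1 ->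
  sup Es - n.+1%:R^-1 < g l1 -> sup Es - m.+1%:R^-1 < g l2 ->
  inner (X l1 - X l2) (X l1 - X l2) <= 2 * (n.+1%:R^-1 + m.+1%:R^-1).
Proof.
move=> Hl1 HM1 Hl2 HM2 Hg1 Hg2.
have Hv : valid (mix 2^-1 l1 l2) by apply: valid_mix => //; lra.
have HM := M_mix 2^-1 _ _ HM1 HM2.
have Hs : g (mix 2^-1 l1 l2) <= sup Es.
  by apply: sup_upper_bound; [exact: Es_sup | exists (mix 2^-1 l1 l2)].
rewrite g_mix // X_mix in Hs.
move: (X l1) (X l2) Hs => X1 X2 Hs.
rewrite !(innerBl, innerBr, innerDl, innerDr, innerZl, innerZr) in Hs *.
rewrite (innerC X2 X1) in Hs *.
set dn := n.+1%:R^-1 in Hg1 Hs *.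
set dm := m.+1%:R^-1 in Hg2 Hs *.
lra.
Qed.

Lemma minty : exists x u, T x u /\ z = x + rho *: u.
Proof.
have Hn : forall n : nat, exists l, [/\ valid l, M l = 1 & sup Es - n.+1%:R^-1 < g l].
  move=> n; have d0 : 0 < n.+1%:R^-1 :> R by rewrite invr_gt0 ltr0n.
  have [r [l [Hl HM ->]] Hr] := sup_adherent d0 Es_sup.
  by exists l.
have [L HL] := choice Hn.
have Hcau : cauchy_ex ((fun n => X (L n)) @ \oo).
  move=> eps eps0.
  have e4 : 0 < eps ^+ 2 / 4 by rewrite divr_gt0 // exprn_gt0.
  have [N _ HN] := near_infty_natSinv_lt (PosNum e4).
  exists (X (L N)); exists N => // n /= HnN.
  rewrite -ball_normE /ball_ /=.
  have [H1 H2 H3] := HL N; have [H4 H5 H6] := HL n.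
  have := cauchy_bound _ _ N n H1 H2 H4 H5 H3 H6.
  have := HN N (leqnn N); have := inv_mono R _ _ HnN.
  rewrite innerxx /=.
  set dN := N.+1%:R^-1; set dn := n.+1%:R^-1.
  have := normr_ge0 (X (L N) - X (L n)).
  set a := `|X (L N) - X (L n)|.
  move=> a0 h1 h2 h3.
  have h4 : a ^+ 2 < eps ^+ 2 by lra.
  rewrite expr2 in h4; rewrite expr2 in h4; nra.
have /cvg_ex[xs Hxs] : cvg ((fun n => X (L n)) @ \oo).
  by apply: cauchy_cvg; apply: cauchy_exP.
have Hall : forall y v, T y v -> inner (xs - y) (xs - w v) <= 0.
  move=> y v Hyv.
  rewrite ball_id.
  set c := 2^-1 *: (y + w v).
  set d := 2^-1 *: (y - w v).
  suff : `|xs - c| ^+ 2 <= inner d d by move=> h; rewrite (innerxx (xs - c)); lra.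
  apply: final_real; [exact: normr_ge0 | exact: innerxx_ge0 |].
  move=> t /andP[t0 t1] e e0.
  have [N1 _ HN1] := cvgr_dist_lt _ _ Hxs _ e0.
  have te0 : 0 < t * e by rewrite mulr_gt0.
  have [N2 _ HN2] := near_infty_natSinv_lt (PosNum te0).
  set n := maxn N1 N2.
  have hn1 := HN1 n (leq_maxl _ _).
  have hn2 := HN2 n (leq_maxr _ _).
  exists (`|X (L n) - c|); split.
  - exact: normr_ge0.
  - have := ler_distD (X (L n)) xs c; move: hn1 => /=; lra.
  - have [H1 H2 H3] := HL n.
    have := key_ineq y v (L n) t n Hyv H1 H2 H3.
    rewrite -/c -/d innerxx /=.
    move: hn2 => /=; set dl := n.+1%:R^-1 => hdl K.
    have K2 : t * ((1 - t) ^+ 2 * `|X (L n) - c| ^+ 2) <= t * (inner d d + e).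
      have : 0 < t < 1 by rewrite t0 t1.
      move/K => K'; lra.
    by rewrite ler_pM2l in K2.
exists xs, (rho^-1 *: (z - xs)); split; last first.
  by rewrite scalerA mulfV ?gt_eqF // scale1r addrC subrK.
pose S0 := fun a => T a `|` [set b | a = xs /\ b = rho^-1 *: (z - xs)].
have Hvec : forall b, b - rho^-1 *: (z - xs) = rho^-1 *: (xs - w b).
  move=> b; rewrite /w !scalerBr scalerA mulVf ?gt_eqF // scale1r !opprB.
  by rewrite addrCA.
have Hrel : forall a b, T a b -> 0 <= inner (a - xs) (b - rho^-1 *: (z - xs)).
  move=> a b Hab; rewrite Hvec innerZr.
  have := Hall a b Hab.
  have -> : xs - a = - (a - xs) by rewrite opprB.
  rewrite innerNl => h.
  apply: mulr_ge0; first by rewrite invr_ge0 ltW.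
  lra.
have HS0 : monotone_op inner S0.
  move=> x y u v [Hx|[-> ->]] [Hy|[-> ->]].
  - exact: Hmono Hx Hy.
  - exact: Hrel.
  - have -> : xs - y = - (y - xs) by rewrite opprB.
    have -> : rho^-1 *: (z - xs) - v = - (v - rho^-1 *: (z - xs)) by rewrite opprB.
    by rewrite innerNl innerNr opprK; exact: Hrel.
  - by rewrite subrr inner0l.
have := Hmax.2 S0 HS0 (fun a b Hb => or_introl Hb) xs.
move=> E0; have : S0 xs (rho^-1 *: (z - xs)) by right.
by rewrite E0.
Qed.

End Hil.

Lemma resolvent_spec (R : realType) (V : completeNormedModType R)
  (inner : V -> V -> R) (T : V -> set V) (rho : R) (z : V) :
  is_inner_product inner -> maximal_monotone inner T -> 0 < rho ->
  exists u, T (resolvent T rho z) u /\ z = resolvent T rho z + rho *: u.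
Proof.
move=> Hip Hmax Hrho.
have [x [u [H1 H2]]] := @minty _ _ _ Hip T rho z Hmax.1 Hrho Hmax.
have := @xgetPex _ z [set x | exists2 u, T x u & z = x + rho *: u].
case => [|u' Hu' Hz]; first by exists x, u.
by exists u'.
Qed.

Lemma diffzz (R : realType) (V : completeNormedModType R) (z a b : V) :
  (z - a) - (z - b) = b - a.
Proof. by rewrite opprB addrA addrC addrA addKr addrC. Qed.

Lemma res_norm (R : realType) (V : completeNormedModType R)
  (inner : V -> V -> R) (T : V -> set V) (r : R) (z : V) :
  is_inner_product inner -> maximal_monotone inner T -> 0 < r ->
  exists u, [/\ T (resolvent T r z) u, resolvent T r z = z - r *: u &
     `|resolvent T r z - z| = r * `|u|].
Proof.
move=> Hip Hmax Hr.
have [u [H1 E1]] := resolvent_spec _ _ _ T r z Hip Hmax Hr.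
set x := resolvent T r z in H1 E1 *.
have ex : x = z - r *: u by rewrite E1 addrK.
exists u; split => //.
by rewrite {1}ex addrC addKr normrN normrZ gtr0_norm.
Qed.

Lemma p_mono (R : realType) (V : completeNormedModType R)
  (inner : V -> V -> R) (T : V -> set V) (z : V) (r1 r2 : R) :
  is_inner_product inner -> maximal_monotone inner T -> 0 < r1 -> r1 <= r2 ->
  `|resolvent T r1 z - z| <= `|resolvent T r2 z - z|.
Proof.
move=> Hip Hmax h1 h12.
have h2 : 0 < r2 by apply: lt_le_trans h12.
have [u1 [H1 E1 N1]] := res_norm _ _ _ T r1 z Hip Hmax h1.
have [u2 [H2 E2 N2]] := res_norm _ _ _ T r2 z Hip Hmax h2.
rewrite N1 N2.
have h := Hmax.1 _ _ _ _ H1 H2.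
rewrite E1 E2 diffzz in h.
have iBl := @innerBl _ _ _ Hip; have iBr := @innerBr _ _ _ Hip.
have iZl := @innerZl _ _ _ Hip; have iZr := @innerZr _ _ _ Hip.
rewrite !(iBl, iBr, iZl, iZr) (@innerC _ _ _ Hip u2 u1) in h.
rewrite !(@innerxx _ _ _ Hip) in h.
have hc := @cs _ _ _ Hip u1 u2.
have a0 := normr_ge0 u1; have b0 := normr_ge0 u2.
set a := `|u1| in h hc a0 *; set b := `|u2| in h hc b0 *.
set q := inner u1 u2 in h hc.
have h3 : r1 * a ^+ 2 + r2 * b ^+ 2 <= (r1 + r2) * (a * b).
  have : (r1 + r2) * q <= (r1 + r2) * (a * b) by rewrite ler_wpM2l //; lra.
  lra.
case: (lerP (r1 * a) (r2 * b)) => // hlt.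
exfalso.
case: (lerP a b) => hab.
  have : r2 * a <= r2 * b by rewrite ler_wpM2l //; lra.
  have : r1 * a <= r2 * a by rewrite ler_wpM2r.
  lra.
have : 0 < (r1 * a - r2 * b) * (a - b) by rewrite mulr_gt0 // subr_gt0.
nra.
Qed.

Lemma alg (R : realType) (a b r1 r2 p1 p2 : R) : 0 <= a -> 0 <= b -> 0 < r1 ->
  r1 <= r2 -> 0 <= p1 -> p1 <= p2 ->
  a * r1 ^+ 2 + b * r1 + (r1 * p1) ^+ 2 <= a * r2 ^+ 2 + b * r2 + (r2 * p2) ^+ 2 /\
  r2 * (a * r1 ^+ 2 + b * r1 + (r1 * p1) ^+ 2) <= r1 * (a * r2 ^+ 2 + b * r2 + (r2 * p2) ^+ 2).
Proof.
move=> a0 b0 r10 r12 p10 p12.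
have r20 : 0 < r2 by apply: lt_le_trans r12.
have hp2 : p1 ^+ 2 <= p2 ^+ 2 by rewrite ler_sqr ?nnegrE //; apply: le_trans p12.
have hr2 : r1 ^+ 2 <= r2 ^+ 2 by rewrite ler_sqr ?nnegrE //; lra.
have hrp : (r1 * p1) ^+ 2 <= (r2 * p2) ^+ 2.
  rewrite !exprMn; apply: ler_pM => //; rewrite sqr_ge0 //.
split.
  have : a * r1 ^+ 2 <= a * r2 ^+ 2 by rewrite ler_wpM2l.
  have : b * r1 <= b * r2 by rewrite ler_wpM2l.
  lra.
have E : r1 * (a * r2 ^+ 2 + b * r2 + (r2 * p2) ^+ 2) -
         r2 * (a * r1 ^+ 2 + b * r1 + (r1 * p1) ^+ 2) =
         r1 * r2 * (a * (r2 - r1) + (r2 * p2 ^+ 2 - r1 * p1 ^+ 2)) by ring.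
have : 0 <= r1 * r2 * (a * (r2 - r1) + (r2 * p2 ^+ 2 - r1 * p1 ^+ 2)).
  apply: mulr_ge0; first by apply: mulr_ge0; lra.
  apply: addr_ge0; first by apply: mulr_ge0 => //; lra.
  rewrite subr_ge0; apply: ler_pM => //; [lra | exact: sqr_ge0].
lra.
Qed.
Arguments alg {R a b r1 r2 p1 p2}.

Lemma p_pos (R : realType) (V : completeNormedModType R)
  (inner : V -> V -> R) (T : V -> set V) (r : R) (z : V) :
  is_inner_product inner -> maximal_monotone inner T -> ~ T z 0 -> 0 < r ->
  0 < `|resolvent T r z - z|.
Proof.
move=> Hip Hmax Hz Hr.
have [u [H1 E1 N1]] := res_norm _ _ _ T r z Hip Hmax Hr.
rewrite N1 mulr_gt0 // normr_gt0; apply/negP => /eqP u0.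
by apply: Hz; move: H1; rewrite E1 u0 scaler0 subr0.
Qed.

Theorem lemma5p7 (R : realType) (V : completeNormedModType R)
  (inner : V -> V -> R) (T : V -> set V) (a b : R) (z : V)
  (theta_m theta_p rho_m rho_p rho : R) :
  is_inner_product inner ->
  maximal_monotone inner T ->
  0 <= a -> 0 <= b ->
  ~ T z 0 ->
  0 < theta_m -> theta_m < theta_p ->
  0 < rho_m -> 0 < rho_p ->
  psi T a b rho_m z = theta_m ->
  psi T a b rho_p z = theta_p ->
  0 < rho ->
  (psi T a b rho z < theta_m ->
     rho < rho_m /\ rho_p <= rho * theta_p / psi T a b rho z) /\
  (theta_p < psi T a b rho z ->
     rho * theta_m / psi T a b rho z <= rho_m /\ rho_p < rho).
Proof.
move=> Hip Hmax a0 b0 Hz tm0 tmp rm0 rp0 Hm Hp r0.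
have pm := fun r1 r2 => p_mono _ _ _ T z r1 r2 Hip Hmax.
rewrite /psi in Hm Hp *.
have qr := p_pos _ _ _ T rho z Hip Hmax Hz r0.
have qm := p_pos _ _ _ T rho_m z Hip Hmax Hz rm0.
have qp := p_pos _ _ _ T rho_p z Hip Hmax Hz rp0.
have pmr := pm rho_m rho rm0; have prm := pm rho rho_m r0.
have ppr := pm rho_p rho rp0; have prp := pm rho rho_p r0.
move: pmr prm ppr prp Hm Hp qr qm qp.
set Pr := `|resolvent T rho z - z|.
set Pm := `|resolvent T rho_m z - z|.
set Pp := `|resolvent T rho_p z - z|.
move=> pmr prm ppr prp Hm Hp qr qm qp.
set f := fun r p => a * r ^+ 2 + b * r + (r * p) ^+ 2.
have fr0 : 0 < f rho Pr.
  rewrite /f; have : 0 < (rho * Pr) ^+ 2 by rewrite exprn_gt0 // mulr_gt0.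
  have : 0 <= a * rho ^+ 2 by rewrite mulr_ge0 // sqr_ge0.
  have : 0 <= b * rho by rewrite mulr_ge0 // ltW.
  lra.
rewrite -/(f rho Pr) -/(f rho_m Pm) -/(f rho_p Pp) in Hm Hp *.
split => Hlt.
  have hrm : rho < rho_m.
    case: (lerP rho_m rho) => // h.
    have [h1 _] := alg a0 b0 rm0 h (ltW qm) (pmr h); exfalso; have {h1}h1 : f rho_m Pm <= f rho Pr := h1; lra.
  have hrp : rho < rho_p.
    case: (lerP rho_p rho) => // h.
    have [h1 _] := alg a0 b0 rp0 h (ltW qp) (ppr h); exfalso; have {h1}h1 : f rho_p Pp <= f rho Pr := h1; lra.
  split => //.
  rewrite ler_pdivlMr //.
  have [_ h2] := alg a0 b0 r0 (ltW hrp) (ltW qr) (prp (ltW hrp)).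
  have {h2}h2 : rho_p * f rho Pr <= rho * f rho_p Pp := h2.
  rewrite -Hp; lra.
have hrm : rho_m < rho.
  case: (lerP rho rho_m) => // h.
  have [h1 _] := alg a0 b0 r0 h (ltW qr) (prm h); exfalso; have {h1}h1 : f rho Pr <= f rho_m Pm := h1; lra.
have hrp : rho_p < rho.
  case: (lerP rho rho_p) => // h.
  have [h1 _] := alg a0 b0 r0 h (ltW qr) (prp h); exfalso; have {h1}h1 : f rho Pr <= f rho_p Pp := h1; lra.
split => //.
rewrite ler_pdivrMr //.
have [_ h2] := alg a0 b0 rm0 (ltW hrm) (ltW qm) (pmr (ltW hrm)).
have {h2}h2 : rho * f rho_m Pm <= rho_m * f rho Pr := h2.
rewrite -Hm; lra.
Qed.
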